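(* Let $C_0$ be a binary linear $[n_0,n_0-r_0,3]_2 2$ code (minimum distance $3$, covering radius $2$) with parity-check matrix $H_0=[h_1\cdots h_{n_0}]$, $h_j\in\mathbb{F}_2^{r_0}$, and let $\mathcal P_0$ be a $2$-partition of the columns of $H_0$ into $p$ subsets. Let $m\ge 1$ satisfy $2^m\ge p$. Choose an indicator assignment $\beta_1,\dots,\beta_{n_0}$ with all $\beta_j\in\{*\}\cup(\mathbb{F}_{2^m}\setminus\{1\})$. Fix a nonzero column $w\in\mathbb{F}_2^m$, let $W_m\setminus w$ be $W_m$ with the column $w$ removed, and let $$D_6=\begin{bmatrix}0_{r_0}&0_{r_0}&0_{r_0}\\ W_m\setminus w& w& 0_m\\ 0_m& w& W_m\setminus w\end{bmatrix}$$ (an $(r_0+2m)\times(2^{m+1}-3)$ matrix, $0_v$ denoting zero blocks with $v$ rows). Let $H_C=[D_6\ A_2(h_1,\beta_1)\ \cdots\ A_2(h_{n_0},\beta_{n_0})]$. Then $H_C$ is the parity-check matrix of a binary linear $[n,n-r,3]_2 2$ code with $n=2^m(n_0+2)-3$ and $r=r_0+2m$; i.e. every vector of $\mathbb{F}_2^{r}$ is a column of $H_C$ or a sum of two columns of $H_C$.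
   Context: For a binary linear code with $r\times n$ parity-check matrix $H$ ($r$ = codimension), the covering radius is the smallest $R$ such that every vector of $\mathbb{F}_2^r$ is a sum of at most $R$ columns of $H$ (the zero vector being the empty sum). An $[n,n-r,d]_2R$ code is a binary linear code of length $n$, codimension $r$, minimum distance $d$, covering radius $R$. Partitions: for an $r\times n$ parity-check matrix $H$ and $0\le\ell\le R$, a partition of the column set of $H$ into nonempty subsets is an $(R,\ell)$-partition if every vector of $\mathbb{F}_2^r$ (including zero) is the sum of at least $\ell$ and at most $R$ columns of $H$ lying in pairwise distinct subsets (for $\ell=0$ the zero vector is the empty sum). For $R=2$ and minimum distance $\ge3$, a $(2,0)$-partition is called a $2$-partition. Construction notation: fix $m\ge1$ and identify $\mathbb{F}_2^m$ with the field $\mathbb{F}_{2^m}$ via a fixed $\mathbb{F}_2$-basis, so field products apply to $m$-bit columns. For $h\in\mathbb{F}_2^{r_0}$, an integer $R\ge2$ and $\beta\in\mathbb{F}_{2^m}\cup\{*\}$, $A_R(h,\beta)$ is the $(r_0+Rm)\times 2^m$ binary matrix whose columns, indexed by $\xi\in\mathbb{F}_{2^m}$, are $(h,\xi,\beta\xi,\beta^2\xi,\dots,\beta^{R-1}\xi)^T$ if $\beta\in\mathbb{F}_{2^m}$, and $(h,0_{(R-1)m},\xi)^T$ if $\beta=*$. $W_m$ is the $m\times(2^m-1)$ matrix whose columns are all nonzero vectors of $\mathbb{F}_2^m$ (parity-check matrix of the Hamming code). Given $H_0=[h_1\cdots h_{n_0}]$ and a partition $\mathcal P_0$ of its columns,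 an indicator assignment is a choice $\beta_j\in\mathbb{F}_{2^m}\cup\{*\}$ for each $j$ such that $\beta_i\ne\beta_j$ whenever $h_i,h_j$ lie in distinct subsets of $\mathcal P_0$. *)

(* Defs.v *)
From HB Require Import structures.
From mathcomp Require Import all_boot all_order all_algebra all_field.
Set Implicit Arguments. Unset Strict Implicit. Unset Printing Implicit Defensive.
Import GRing.Theory.
Local Open Scope ring_scope.

Definition wt (n : nat) (c : 'rV['F_2]_n) : nat := #|[set j | c 0 j != 0]|.

Definition codeword (r n : nat) (H : 'M['F_2]_(r, n)) (c : 'rV['F_2]_n) : Prop :=
  H *m c^T = 0.

Definition min_distance (r n : nat) (H : 'M['F_2]_(r, n)) (d : nat) : Prop :=
  (exists c, c != 0 /\ codeword H c /\ wt c = d) /\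
  (forall c, c != 0 -> codeword H c -> (d <= wt c)%N).

Definition sum_of_at_most (r n : nat) (H : 'M['F_2]_(r, n)) (R : nat)
  (v : 'cV['F_2]_r) : Prop :=
  exists S : {set 'I_n}, (#|S| <= R)%N /\ \sum_(j in S) col j H = v.

Definition covering_radius (r n : nat) (H : 'M['F_2]_(r, n)) (R : nat) : Prop :=
  (forall v, sum_of_at_most H R v) /\
  (forall R', (forall v, sum_of_at_most H R' v) -> (R <= R')%N).

(* H is a parity-check matrix of an [n, n-r, d]_2 R code:
   length n (number of columns), codimension r (rank H = r, i.e. dim ker = n - r),
   minimum distance d, covering radius R. *)
Definition code_params (r n : nat) (H : 'M['F_2]_(r, n)) (d R : nat) : Prop :=
  \rank H = r /\ min_distance H d /\ covering_radius H R.

(* A partition of the columns of H into p nonempty subsets, given by the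
   block label f j of column j (block k = {j | f j = k}). *)
Definition nonempty_blocks (n p : nat) (f : 'I_n -> 'I_p) : Prop :=
  forall k : 'I_p, exists j, f j = k.

Definition Rl_partition (r n p : nat) (H : 'M['F_2]_(r, n)) (f : 'I_n -> 'I_p)
  (R l : nat) : Prop :=
  nonempty_blocks f /\
  forall v : 'cV['F_2]_r, exists S : {set 'I_n},
    [/\ (l <= #|S|)%N, (#|S| <= R)%N, {in S &, injective f}
      & \sum_(j in S) col j H = v].

Definition two_partition (r n p : nat) (H : 'M['F_2]_(r, n)) (f : 'I_n -> 'I_p) :=
  Rl_partition H f 2 0.

(* Indicator assignment: beta j = None stands for the symbol *. *)
Definition indicator_assignment (n p : nat) (F : Type) (f : 'I_n -> 'I_p)
  (beta : 'I_n -> option F) : Prop :=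
  forall i j, f i != f j -> beta i <> beta j.

Definition mxofcols (r : nat) (s : seq 'cV['F_2]_r) : 'M['F_2]_(r, size s) :=
  \matrix_(i, j) (nth 0 s j) i 0.

Section Construction.
Variables (r0 m : nat) (F : finFieldType) (phi : F -> 'cV['F_2]_m).
(* phi : the fixed identification F_{2^m} ~ F_2^m *)

Definition A2_cols (h : 'cV['F_2]_r0) (beta : option F)
  : seq 'cV['F_2]_(r0 + (m + m)) :=
  [seq match beta with
       | Some b => col_mx h (col_mx (phi xi) (phi (b * xi)))
       | None => col_mx h (col_mx 0 (phi xi))
       end | xi <- enum F].

Definition Wm_minus (w : 'cV['F_2]_m) : seq 'cV['F_2]_m :=
  [seq v <- enum 'cV['F_2]_m | (v != 0) && (v != w)].

Definition D6_cols (w : 'cV['F_2]_m) : seq 'cV['F_2]_(r0 + (m + m)) :=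
  [seq col_mx 0 (col_mx x 0) | x <- Wm_minus w] ++
  [:: col_mx 0 (col_mx w w)] ++
  [seq col_mx 0 (col_mx 0 x) | x <- Wm_minus w].

Definition HC_cols (n0 : nat) (H0 : 'M['F_2]_(r0, n0)) (beta : 'I_n0 -> option F)
  (w : 'cV['F_2]_m) : seq 'cV['F_2]_(r0 + (m + m)) :=
  D6_cols w ++ flatten [seq A2_cols (col j H0) (beta j) | j <- enum 'I_n0].

End Construction.

(* Main.v *)
Require Import Defs.
From HB Require Import structures.
From mathcomp Require Import all_boot all_order all_algebra all_field.
From mathcomp Require Import ring zify.
From Stdlib Require Import Classical.
Set Implicit Arguments. Unset Strict Implicit. Unset Printing Implicit Defensive.
Import GRing.Theory.
Local Open Scope ring_scope.

Lemma F2_cases (x : 'F_2) : x = 0 \/ x = 1.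
Proof. case: x => [[|[|k]]] // Hk; [left|right]; exact/val_inj. Qed.

Lemma F2_add_self (r : nat) (v : 'cV['F_2]_r) : v + v = 0.
Proof.
apply/matrixP=> i j; rewrite !mxE.
by case: (F2_cases (v i j)) => ->; [rewrite addr0 | apply/val_inj].
Qed.

Lemma F2_add_eq0 (r : nat) (u v : 'cV['F_2]_r) : u + v = 0 -> u = v.
Proof. by move=> h; rewrite -[u]addr0 -(F2_add_self v) addrA h add0r. Qed.

Lemma mulmx_supp (r n : nat) (H : 'M['F_2]_(r, n)) (c : 'rV['F_2]_n) :
  H *m c^T = \sum_(j in [set j | c 0 j != 0]) col j H.
Proof.
apply/matrixP=> i k; rewrite !mxE summxE.
rewrite [RHS]big_mkcond /=; apply: eq_bigr => j _; rewrite !mxE inE (ord1 k).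
by case: (F2_cases (c 0 j)) => ->; rewrite ?mulr0 ?mulr1.
Qed.

Definition ind (n : nat) (S : {set 'I_n}) : 'rV['F_2]_n :=
  \row_j (if j \in S then 1 else 0).

Lemma ind_supp n (S : {set 'I_n}) : [set j | ind S 0 j != 0] = S.
Proof. by apply/setP=> j; rewrite inE mxE; case: (j \in S). Qed.

Lemma mulmx_ind (r n : nat) (H : 'M['F_2]_(r, n)) (S : {set 'I_n}) :
  H *m (ind S)^T = \sum_(j in S) col j H.
Proof. by rewrite mulmx_supp ind_supp. Qed.

Lemma wt_ind n (S : {set 'I_n}) : wt (ind S) = #|S|.
Proof. by rewrite /wt ind_supp. Qed.

Lemma ind_eq0 n (S : {set 'I_n}) : (ind S == 0) = (S == set0).
Proof.
apply/eqP/eqP=> [h|->].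
  by rewrite -(ind_supp S) h; apply/setP=> j; rewrite !inE mxE.
by apply/matrixP=> i j; rewrite !mxE inE.
Qed.

Lemma supp_eq0 n (c : 'rV['F_2]_n) : [set j | c 0 j != 0] = set0 -> c = 0.
Proof.
move=> h; apply/matrixP=> i j; rewrite (ord1 i) mxE.
apply/eqP; apply: contraT => nz.
by have := in_set0 j; rewrite -h inE nz.
Qed.

Lemma min_dist3 (r n : nat) (H : 'M['F_2]_(r, n)) :
  (forall j, col j H != 0) ->
  (forall i k, i != k -> col i H != col k H) ->
  (exists S : {set 'I_n}, #|S| = 3%N /\ \sum_(j in S) col j H = 0) ->
  min_distance H 3.
Proof.
move=> nz dis [S [cS sS]]; split.
  exists (ind S); split; last by rewrite /codeword mulmx_ind sS wt_ind.
  by rewrite ind_eq0; apply/eqP=> S0; rewrite S0 cards0 in cS.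
move=> c c0; rewrite /codeword mulmx_supp /wt => hc.
set T := [set j | c 0 j != 0] in hc *.
case: (ltnP 2 #|T|) => // hT; exfalso.
move: hT; rewrite leq_eqVlt ltnS leq_eqVlt ltnS leqn0; case/or3P.
- case/cards2P=> [i [k [ik TE]]]; move: hc; rewrite TE big_setU1 ?inE //= big_set1.
  by move/F2_add_eq0/eqP; rewrite (negPf (dis _ _ ik)).
- case/cards1P=> [j TE]; move: hc; rewrite TE big_set1 => /eqP.
  by rewrite (negPf (nz j)).
- move/eqP/cards0_eq => T0; by move: c0; rewrite (supp_eq0 T0) eqxx.
Qed.

Lemma colE (r : nat) (s : seq 'cV['F_2]_r) (j : 'I_(size s)) :
  col j (mxofcols s) = nth 0 s j.
Proof. by apply/matrixP=> i k; rewrite !mxE (ord1 k). Qed.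

Definition pt (r : nat) (s : seq 'cV['F_2]_r) (x : 'cV['F_2]_r) := x = 0 \/ x \in s.

Lemma pt_sum (r : nat) (s : seq 'cV['F_2]_r) x y :
  pt s x -> pt s y -> sum_of_at_most (mxofcols s) 2 (x + y).
Proof.
have idx z : z \in s -> exists j : 'I_(size s), col j (mxofcols s) = z.
  by move=> zs; exists (Ordinal (etrans (index_mem z s) zs)) => /=;
    rewrite colE /= nth_index.
case=> [->|/idx [i ci]]; case=> [->|/idx [k ck]].
- by exists set0; rewrite cards0 big_set0 addr0.
- by exists [set k]; rewrite cards1 big_set1 add0r.
- by exists [set i]; rewrite cards1 big_set1 addr0.
case: (eqVneq i k) => [ik|ik].
  by exists set0; rewrite cards0 big_set0 -ci -ck ik F2_add_self.
by exists [set i; k]; rewrite cards2 ik big_setU1 ?inE //= big_set1 ci ck.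
Qed.

Lemma sum1_inv (r : nat) (s : seq 'cV['F_2]_r) v :
  sum_of_at_most (mxofcols s) 1 v -> pt s v.
Proof.
case=> S [cS <-]; move: cS; rewrite leq_eqVlt ltnS leqn0; case/orP.
  by case/cards1P=> j ->; rewrite big_set1 colE; right; apply: mem_nth.
by move/eqP/cards0_eq => ->; rewrite big_set0; left.
Qed.

Lemma rank_full (r n R : nat) (H : 'M['F_2]_(r, n)) :
  (forall v, sum_of_at_most H R v) -> \rank H = r.
Proof.
move=> hv; rewrite -mxrank_tr; apply/eqP; change (row_full H^T); rewrite -sub1mx; apply/row_subP=> i.
case: (hv (row i 1%:M)^T) => S [_ hS].
rewrite -[row i _]trmxK -hS raddf_sum /=; apply: summx_sub => j _.
by rewrite tr_col row_sub.
Qed.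

Lemma cov2 (r n : nat) (H : 'M['F_2]_(r, n)) :
  (forall v, sum_of_at_most H 2 v) -> (exists v, ~ sum_of_at_most H 1 v) ->
  covering_radius H 2.
Proof.
move=> h2 [v nv]; split=> // R' hR; case: (ltnP 1 R') => // hR1; exfalso.
by apply: nv; case: (hR v) => S [cS sS]; exists S; split=> //; apply: leq_trans hR1.
Qed.

Lemma H0_facts (r0 n0 : nat) (H0 : 'M['F_2]_(r0, n0)) :
  code_params H0 3 2 ->
  [/\ forall j, col j H0 != 0,
      forall i k, i != k -> col i H0 != col k H0,
      exists S : {set 'I_n0}, #|S| = 3%N /\ \sum_(j in S) col j H0 = 0
    & exists u, ~ sum_of_at_most H0 1 u].
Proof.
case=> _ [[ex md] [_ cr]]; split.
- move=> j; apply/negP=> /eqP cj.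
  have := md (ind [set j]); rewrite wt_ind cards1 ind_eq0.
  move=> h; have //: (3 <= 1)%N; apply: h.
    by apply/set0Pn; exists j; rewrite inE.
  by rewrite /codeword mulmx_ind big_set1.
- move=> i k ik; apply/negP=> /eqP cik.
  have := md (ind [set i; k]); rewrite wt_ind cards2 ik ind_eq0.
  move=> h; have //: (3 <= 2)%N; apply: h.
    by apply/set0Pn; exists i; rewrite !inE eqxx.
  by rewrite /codeword mulmx_ind big_setU1 ?inE //= big_set1 cik F2_add_self.
- case: ex => [c [c0 [cc wc]]]; exists [set j | c 0 j != 0]; split=> //.
  by rewrite -mulmx_supp.
- apply: NNPP => nex; have: (2 <= 1)%N; last by [].
  apply: cr => v; apply: NNPP => nv; apply: nex; by exists v.
Qed.

Section Constr.
Variables (r0 n0 m : nat) (F : finFieldType) (phi : F -> 'cV['F_2]_m).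
Variables (H0 : 'M['F_2]_(r0, n0)) (beta : 'I_n0 -> option F) (w : 'cV['F_2]_m).
Hypothesis phiD : forall x y : F, phi (x + y) = phi x + phi y.
Hypothesis phiB : bijective phi.
Hypothesis nz0 : forall j, col j H0 != 0.
Hypothesis dis0 : forall i k, i != k -> col i H0 != col k H0.
Hypothesis w0 : w != 0.

Lemma phi0 : phi 0 = 0.
Proof. by apply/eqP; rewrite -(addrI (phi 0) (_ : phi 0 + phi 0 = phi 0 + 0)) // addr0 -phiD addr0. Qed.

Lemma phi_inj : injective phi.
Proof. exact: bij_inj. Qed.

Lemma char2 (x : F) : x + x = 0.
Proof. by apply: phi_inj; rewrite phiD phi0 F2_add_self. Qed.

Lemma oppF (x : F) : - x = x.
Proof. by apply/eqP; rewrite -subr_eq0 -opprD char2 oppr0. Qed.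

Lemma phi_surj a : exists x, phi x = a.
Proof. by case: phiB => g _ gK; exists (g a); rewrite gK. Qed.

Definition om : F := let: exist x _ := sig_eqW (phi_surj w) in x.
Lemma omE : phi om = w.
Proof. by rewrite /om; case: sig_eqW. Qed.
Lemma om0 : om != 0.
Proof. by apply: contra w0 => /eqP o0; rewrite -omE o0 phi0. Qed.

Lemma phi_eq0 x : (phi x == 0) = (x == 0).
Proof. by rewrite -phi0 (inj_eq phi_inj). Qed.

Definition V (u : 'cV['F_2]_r0) (x y : F) : 'cV['F_2]_(r0 + (m + m)) :=
  col_mx u (col_mx (phi x) (phi y)).

Lemma VD u x y u' x' y' : V u x y + V u' x' y' = V (u + u') (x + x') (y + y').
Proof. by rewrite /V !add_col_mx !phiD. Qed.

Lemma V00 : V 0 0 0 = 0.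
Proof. by rewrite /V phi0 !col_mx0. Qed.

Lemma V_surj v : exists u x y, v = V u x y.
Proof.
case: (phi_surj (usubmx (dsubmx v))) => x hx.
case: (phi_surj (dsubmx (dsubmx v))) => y hy.
by exists (usubmx v), x, y; rewrite /V hx hy !vsubmxK.
Qed.

Lemma V_inj u x y u' x' y' : V u x y = V u' x' y' -> [/\ u = u', x = x' & y = y'].
Proof.
by case/eq_col_mx=> -> /eq_col_mx [/phi_inj -> /phi_inj ->].
Qed.

Let s := HC_cols phi H0 beta w.

Lemma memWm x : (x \in Wm_minus w) = (x != 0) && (x != w).
Proof. by rewrite /Wm_minus mem_filter mem_enum andbT. Qed.

Lemma memD1 x : x != 0 -> x != om -> V 0 x 0 \in s.
Proof.
move=> x0 xo; rewrite /s /HC_cols /D6_cols !mem_cat; apply/orP; left.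
apply/orP; left; rewrite /V phi0; apply: map_f.
by rewrite memWm phi_eq0 x0 -omE (inj_eq phi_inj).
Qed.

Lemma memD3 x : x != 0 -> x != om -> V 0 0 x \in s.
Proof.
move=> x0 xo; rewrite /s /HC_cols /D6_cols !mem_cat; apply/orP; left.
apply/orP; right; apply/orP; right; rewrite /V phi0; apply: map_f.
by rewrite memWm phi_eq0 x0 -omE (inj_eq phi_inj).
Qed.

Lemma memD2 : V 0 om om \in s.
Proof.
rewrite /s /HC_cols /D6_cols !mem_cat; apply/orP; left.
by apply/orP; right; apply/orP; left; rewrite /V omE mem_seq1.
Qed.

Definition fA (j : 'I_n0) (xi : F) : 'cV['F_2]_(r0 + (m + m)) :=
  match beta j with
  | Some b => col_mx (col j H0) (col_mx (phi xi) (phi (b * xi)))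
  | None => col_mx (col j H0) (col_mx 0 (phi xi))
  end.

Lemma flatE : flatten [seq A2_cols phi (col j H0) (beta j) | j <- enum 'I_n0]
  = [seq fA j xi | j <- enum 'I_n0, xi <- enum F].
Proof. by []. Qed.

Lemma memA j xi : fA j xi \in s.
Proof.
rewrite /s /HC_cols flatE mem_cat; apply/orP; right.
by apply/allpairsP; exists (j, xi); rewrite !mem_enum.
Qed.

Lemma memAS j c xi : beta j = Some c -> V (col j H0) xi (c * xi) \in s.
Proof. by move=> hb; have := memA j xi; rewrite /fA hb. Qed.

Lemma memAN j xi : beta j = None -> V (col j H0) 0 xi \in s.
Proof. by move=> hb; have := memA j xi; rewrite /fA hb /V phi0. Qed.

End Constr.

Section Constr2.
Variables (r0 n0 m : nat) (F : finFieldType) (phi : F -> 'cV['F_2]_m).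
Variables (H0 : 'M['F_2]_(r0, n0)) (beta : 'I_n0 -> option F) (w : 'cV['F_2]_m).
Hypothesis phiD : forall x y : F, phi (x + y) = phi x + phi y.
Hypothesis phiB : bijective phi.
Hypothesis nz0 : forall j, col j H0 != 0.
Hypothesis dis0 : forall i k, i != k -> col i H0 != col k H0.
Hypothesis w0 : w != 0.

Let s := HC_cols phi H0 beta w.

Lemma topA j xi : usubmx (fA phi H0 beta j xi) = col j H0.
Proof. by rewrite /fA; case: (beta j) => [b|]; rewrite col_mxKu. Qed.

Lemma memD6 z : z \in D6_cols r0 w -> usubmx z = 0 /\ z != 0.
Proof.
rewrite /D6_cols !mem_cat mem_seq1; case/or3P.
- case/mapP=> x; rewrite memWm => /andP [x0 _] ->; rewrite col_mxKu; split=> //.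
  by apply: contra x0; rewrite !col_mx_eq0 => /and3P [].
- by move/eqP->; rewrite col_mxKu; split=> //;
    apply: contra w0; rewrite !col_mx_eq0 => /and3P [].
- case/mapP=> x; rewrite memWm => /andP [x0 _] ->; rewrite col_mxKu; split=> //.
  by apply: contra x0; rewrite !col_mx_eq0 => /and3P [].
Qed.

Lemma uniqD6 : uniq (D6_cols r0 w).
Proof.
have inj1 : injective (fun x : 'cV['F_2]_m => col_mx (0 : 'cV['F_2]_r0) (col_mx x (0 : 'cV_m))).
  by move=> x y /eq_col_mx [_ /eq_col_mx [-> _]].
have inj3 : injective (fun x : 'cV['F_2]_m => col_mx (0 : 'cV['F_2]_r0) (col_mx (0 : 'cV_m) x)).
  by move=> x y /eq_col_mx [_ /eq_col_mx [_ ->]].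
have uW : uniq (Wm_minus w) by rewrite filter_uniq // enum_uniq.
rewrite /D6_cols cat_uniq map_inj_uniq // uW /= map_inj_uniq // uW andbT.
rewrite negb_or; apply/andP; split; [apply/andP; split|].
- apply/mapP=> -[x]; rewrite memWm => /andP [_ xw] /eq_col_mx [_ /eq_col_mx [wx _]].
  by rewrite wx eqxx in xw.
- apply/hasPn=> z /mapP [x]; rewrite memWm => /andP [x0 _] ->.
  apply/mapP=> -[y]; rewrite memWm => /andP [y0 _] /eq_col_mx [_ /eq_col_mx [y0' _]].
  by rewrite -y0' eqxx in y0.
- apply/mapP=> -[x]; rewrite memWm => /andP [_ xw] /eq_col_mx [_ /eq_col_mx [_ wx]].
  by rewrite wx eqxx in xw.
Qed.

Lemma uniqA : uniq [seq fA phi H0 beta j xi | j <- enum 'I_n0, xi <- enum F].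
Proof.
apply: allpairs_uniq; rewrite ?enum_uniq // => -[j xi] [j' xi'] _ _ /= e.
have jj : j = j'.
  apply/eqP; apply: contraT => ne; have := dis0 ne.
  by rewrite -(topA j xi) -(topA j' xi') e eqxx.
subst j'; congr (_, _); move: e; rewrite /fA; case: (beta j) => [b|].
  by case/eq_col_mx => _ /eq_col_mx [/(phi_inj phiB) -> _].
by case/eq_col_mx => _ /eq_col_mx [_ /(phi_inj phiB) ->].
Qed.

Lemma uniq_s : uniq s.
Proof.
rewrite /s /HC_cols flatE cat_uniq uniqD6 uniqA andbT /=.
apply/hasPn => z /allpairsP [[j xi] [_ _ ->]] /=; apply/negP => /memD6 [t _].
by have := nz0 j; rewrite -(topA j xi) t eqxx.
Qed.

Lemma s_nz : 0 \notin s.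
Proof.
rewrite /s /HC_cols flatE mem_cat negb_or; apply/andP; split.
  by apply/negP=> /memD6 [_]; rewrite eqxx.
apply/allpairsP=> -[[j xi] [_ _ /= e]].
by have := nz0 j; rewrite -(topA j xi) -e linear0 eqxx.
Qed.

End Constr2.

Lemma card_cV m : #|{: 'cV['F_2]_m}| = (2 ^ m)%N.
Proof. by rewrite card_mx card_Fp // muln1. Qed.

Lemma size_Wm m (w : 'cV['F_2]_m) : w != 0 -> size (Wm_minus w) = (2 ^ m - 2)%N.
Proof.
move=> w0; rewrite /Wm_minus size_filter.
have -> : count (fun v => (v != 0) && (v != w)) (enum 'cV['F_2]_m)
   = #|[pred v : 'cV['F_2]_m | (v != 0) && (v != w)]|.
  rewrite cardE /enum_mem size_filter (@eq_filter _ _ predT) // filter_predT; exact: eq_count.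
rewrite -card_cV (cardD1 0 predT) (cardD1 w [predD1 predT & 0]) !inE w0 /=.
rewrite add1n addSn !subSS subn0.
by apply: eq_card => v; rewrite !inE andbT andbC.
Qed.

Section Cover.
Variables (r0 n0 p m : nat) (F : finFieldType) (phi : F -> 'cV['F_2]_m).
Variables (H0 : 'M['F_2]_(r0, n0)) (beta : 'I_n0 -> option F) (w : 'cV['F_2]_m).
Variable (f : 'I_n0 -> 'I_p).
Hypothesis phiD : forall x y : F, phi (x + y) = phi x + phi y.
Hypothesis phiB : bijective phi.
Hypothesis nz0 : forall j, col j H0 != 0.
Hypothesis dis0 : forall i k, i != k -> col i H0 != col k H0.
Hypothesis w0 : w != 0.
Hypothesis tp : two_partition H0 f.
Hypothesis bad0 : exists u, ~ sum_of_at_most H0 1 u.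
Hypothesis ia : indicator_assignment f beta.
Hypothesis nb1 : forall j, beta j <> Some 1.

Let s := HC_cols phi H0 beta w.
Let o := om w phiB.
Local Notation Vv := (V phi).

Let ch (x : F) : x + x = 0 := char2 phiD phiB x.
Let c2 (x y : F) : x + (x + y) = y.
Proof. by rewrite addrA ch add0r. Qed.
Let c2' (x y : F) : y + x + x = y.
Proof. by rewrite -addrA ch addr0. Qed.

Let mS j c xi : beta j = Some c -> pt s (Vv (col j H0) xi (c * xi)).
Proof. by move=> h; right; apply: memAS. Qed.
Let mN j xi : beta j = None -> pt s (Vv (col j H0) 0 xi).
Proof. by move=> h; right; apply: memAN. Qed.
Let DA x : x != o -> pt s (Vv 0 x 0).
Proof.
case: (eqVneq x 0) => [->|x0 xo]; first by left; rewrite V00.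
by right; apply: memD1.
Qed.
Let DB x : x != o -> pt s (Vv 0 0 x).
Proof.
case: (eqVneq x 0) => [->|x0 xo]; first by left; rewrite V00.
by right; apply: memD3.
Qed.
Let DC : pt s (Vv 0 o o).
Proof. by right; apply: memD2. Qed.

Definition good u a b := exists x y, pt s x /\ pt s y /\ Vv u a b = x + y.

Let goodI u a b u1 a1 b1 u2 a2 b2 :
  pt s (Vv u1 a1 b1) -> pt s (Vv u2 a2 b2) ->
  u = u1 + u2 -> a = a1 + a2 -> b = b1 + b2 -> good u a b.
Proof.
move=> h1 h2 -> -> ->; exists (Vv u1 a1 b1), (Vv u2 a2 b2); do 2!split=> //.
by rewrite VD.
Qed.

Lemma p_ge2 : (2 <= p)%N.
Proof.
case: (ltnP 1 p) => // hp; exfalso; case: bad0 => u; apply.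
case: tp => _ /(_ u) [S [_ cS inj sS]]; exists S; split=> //.
by rewrite -(card_in_imset inj); apply: leq_trans (max_card _) _; rewrite card_ord.
Qed.

Lemma small_case : (forall x : F, x = 0 \/ x = o) ->
  (exists j, beta j = Some 0) /\ (exists j, beta j = None).
Proof.
move=> all2.
have o1 : o = 1 by case: (all2 1) => // /eqP; rewrite oner_eq0.
have vals j : beta j = None \/ beta j = Some 0.
  case E: (beta j) => [c|]; [right|by left].
  by case: (all2 c) => [->//|co]; exfalso; apply: (nb1 (j:=j)); rewrite E co o1.
have p2 := p_ge2; case: tp => [ne _].
case: (ne (Ordinal (ltnW p2))) => j0 f0; case: (ne (Ordinal p2)) => j1 f1.
have : beta j0 <> beta j1 by apply: ia; rewrite f0 f1.
by case: (vals j0) (vals j1) => e0 [] e1; rewrite e0 e1 // => _; split; eexists; eassumption.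
Qed.

Lemma E12 : good 0 o 0 /\ good 0 0 o.
Proof.
case: (boolP [exists x : F, (x != 0) && (x != o)]).
  case/existsP=> x /andP [x0 xo].
  have xo' : x + o != o by apply: contra x0 => /eqP h; rewrite -(c2' o x) h ch.
  split.
    by apply: (goodI (DA xo) (DA xo')); rewrite ?addr0 ?c2.
  by apply: (goodI (DB xo) (DB xo')); rewrite ?addr0 ?c2.
move=> nex; have all2 : forall x : F, x = 0 \/ x = o.
  move=> x; case: (eqVneq x 0) => [|x0]; [by left|right].
  by apply/eqP; apply: contraR nex => xo; apply/existsP; exists x; rewrite x0.
case: (small_case all2) => [[j hj] [k hk]]; split.
  apply: (goodI (mS o hj) (mS 0 hj)); rewrite ?mul0r ?addr0 //.
  by rewrite F2_add_self.
apply: (goodI (mN o hk) (mN 0 hk)); rewrite ?addr0 //.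
by rewrite F2_add_self.
Qed.

Lemma good0 a b : good 0 a b.
Proof.
case: (eqVneq a o) => [->|ao]; case: (eqVneq b o) => [->|bo].
- by apply: (goodI DC (or_introl (V00 r0 phiD))); rewrite ?addr0.
- case: (eqVneq b 0) => [->|b0]; first by case: E12.
  have bo' : b + o != o by apply: contra b0 => /eqP h; rewrite -(c2' o b) h ch.
  by apply: (goodI DC (DB bo')); rewrite ?addr0 // [RHS]addrC c2'.
- case: (eqVneq a 0) => [->|a0]; first by case: E12.
  have ao' : a + o != o by apply: contra a0 => /eqP h; rewrite -(c2' o a) h ch.
  by apply: (goodI DC (DA ao')); rewrite ?addr0 // [RHS]addrC c2'.
- by apply: (goodI (DA ao) (DB bo)); rewrite ?addr0 ?add0r.
Qed.

Lemma good_single j a b : good (col j H0) a b.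
Proof.
case E: (beta j) => [c|].
- case: (eqVneq (b + c * a) o) => [e|ne].
  + case: (eqVneq c 0) => [c0|c0].
    * have bo : b = o by rewrite -e c0 mul0r addr0.
      apply: (goodI (mS (a + o) E) DC); rewrite ?addr0 ?c2' //.
      by rewrite c0 mul0r add0r.
    * case: (eqVneq (a + b / c) o) => [e2|ne2].
      - exfalso; apply: (nb1 (j:=j)); rewrite E.
        have h : c * o = o.
          by rewrite -{1}e2 mulrDr [c * (b / c)]mulrC divfK // addrC e.
        have : (c - 1) * o == 0 by rewrite mulrBl h mul1r subrr.
        rewrite mulf_eq0 (negPf (om0 phiD phiB w0)) orbF subr_eq0.
        by move/eqP->.
      - apply: (goodI (mS (b / c) E) (DA ne2)); rewrite ?addr0 //.
          by rewrite [RHS]addrC c2'.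
        by rewrite mulrC divfK.
  + apply: (goodI (mS a E) (DB ne)); rewrite ?addr0 //.
    by rewrite [RHS]addrC c2'.
- case: (eqVneq a o) => [->|ao].
  + by apply: (goodI (mN (b + o) E) DC); rewrite ?addr0 ?add0r ?c2'.
  + by apply: (goodI (mN b E) (DA ao)); rewrite ?addr0 ?add0r.
Qed.

Lemma good_pair i k a b : beta i <> beta k -> good (col i H0 + col k H0) a b.
Proof.
case Ei: (beta i) => [d1|]; case Ek: (beta k) => [d2|] ne.
- have d0 : d1 - d2 != 0.
    by rewrite subr_eq0; apply/eqP=> e; apply: ne; rewrite e.
  apply: (goodI (mS ((b - d2 * a) / (d1 - d2)) Ei) (mS (a - (b - d2 * a) / (d1 - d2)) Ek)) => //.
    by rewrite addrC subrK.
  by field.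
- apply: (goodI (mS a Ei) (mN (b - d1 * a) Ek)); rewrite ?addr0 //.
  by rewrite addrC subrK.
- apply: (goodI (mN (b - d2 * a) Ei) (mS a Ek)); rewrite ?add0r //.
  by rewrite subrK.
- by [].
Qed.

Lemma cover v : sum_of_at_most (mxofcols s) 2 v.
Proof.
case: (V_surj phiB v) => u [a [b ->]].
suff [x [y [hx [hy ->]]]] : good u a b by apply: pt_sum.
case: (eqVneq u 0) => [->|u0]; first exact: good0.
case: tp => _ /(_ u) [S [_ cS inj sS]].
move: cS; rewrite leq_eqVlt ltnS leq_eqVlt ltnS leqn0; case/or3P.
- case/cards2P=> [i [k [ik SE]]]; move: sS inj; rewrite SE big_setU1 ?inE //= big_set1.
  move=> <- inj; apply: good_pair; apply: ia; apply/negP=> /eqP fik.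
  by move: ik; rewrite (inj i k) ?eqxx // !inE eqxx ?orbT.
- by case/cards1P=> j SE; move: sS; rewrite SE big_set1 => <-; apply: good_single.
- move/eqP/cards0_eq => S0; move: sS; rewrite S0 big_set0 => u00.
  by rewrite -u00 eqxx in u0.
Qed.
End Cover.

Lemma sum_col_mx0 (r0 k n : nat) (S : {set 'I_n}) (a : 'I_n -> 'cV['F_2]_r0) :
  \sum_(j in S) col_mx (a j) (0 : 'cV['F_2]_k) = col_mx (\sum_(j in S) a j) 0.
Proof.
apply: (big_rec2 (fun y1 y2 => y1 = col_mx y2 0)); first by rewrite col_mx0.
by move=> j y z _ ->; rewrite add_col_mx addr0.
Qed.

Unset Implicit Arguments.

Theorem theorem5p1 (r0 n0 p m : nat) (H0 : 'M['F_2]_(r0, n0))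
  (f : 'I_n0 -> 'I_p) (F : finFieldType) (phi : F -> 'cV['F_2]_m)
  (beta : 'I_n0 -> option F) (w : 'cV['F_2]_m) :
  code_params H0 3 2 ->
  two_partition H0 f ->
  (1 <= m)%N ->
  (p <= 2 ^ m)%N ->
  #|F| = (2 ^ m)%N ->
  (forall x y : F, phi (x + y) = phi x + phi y) ->
  bijective phi ->
  indicator_assignment f beta ->
  (forall j, beta j <> Some 1) ->
  w != 0 ->
  size (HC_cols phi H0 beta w) = (2 ^ m * (n0 + 2) - 3)%N /\
  code_params (mxofcols (HC_cols phi H0 beta w)) 3 2.
Proof.
move=> cp tp m1 _ hF phiD phiB ia nb1 w0.
case: (H0_facts cp) => nz0 dis0 [S [cS sS]] [u nu].
set s := HC_cols phi H0 beta w.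
have hcov := cover phiD phiB w0 tp (ex_intro _ u nu) ia nb1.
split.
  have t2 : (2 <= 2 ^ m)%N by rewrite -{1}(expn1 2) leq_pexp2l.
  rewrite /s /HC_cols flatE size_cat size_allpairs /D6_cols !size_cat !size_map.
  rewrite size_Wm // -!enumT -!cardT card_ord hF /=.
  move: t2; move: (2 ^ m)%N => t t2.
  rewrite mulnDr muln2 mulnC -addnn; lia.
split; first exact: rank_full hcov.
split.
  apply: min_dist3.
  - move=> j; rewrite colE; apply/negP=> /eqP e.
    by have := s_nz phi beta nz0 w0; rewrite -/s -e mem_nth.
  - move=> i k ik; rewrite !colE; apply/negP => /eqP e.
    by move/eqP: e; rewrite nth_uniq ?(uniq_s beta phiB nz0 dis0 w0) // => /eqP /val_inj e; rewrite e eqxx in ik.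
  - have xin j : fA phi H0 beta j 0 \in s by apply: memA.
    have xE j : fA phi H0 beta j 0 = col_mx (col j H0) 0.
      by rewrite /fA; case: (beta j) => [b|]; rewrite ?mulr0 (phi0 phiD) col_mx0.
    pose g j : 'I_(size s) := Ordinal (etrans (index_mem _ _) (xin j)).
    have cg j : col (g j) (mxofcols s) = col_mx (col j H0) 0.
      by rewrite colE /= nth_index // -xE.
    have ginj : injective g.
      move=> i k /(congr1 (fun z => col z (mxofcols s))); rewrite !cg.
      case/eq_col_mx=> e _; apply/eqP; apply: contraT => ne.
      by have := dis0 _ _ ne; rewrite e eqxx.
    exists (g @: S); split; first by rewrite card_imset.
    rewrite big_imset /=; last by move=> i k _ _; apply: ginj.
    by rewrite (eq_bigr _ (fun j _ => cg j)) sum_col_mx0 sS col_mx0.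
apply: cov2 => //; exists (col_mx u 0) => /sum1_inv [e|].
  apply: nu; exists set0; rewrite cards0 big_set0; split=> //.
  by have := congr1 usubmx e; rewrite col_mxKu linear0.
rewrite /s /HC_cols flatE mem_cat; case/orP.
  move/(memD6 w0) => [t _]; apply: nu; exists set0; rewrite cards0 big_set0; split=> //.
  by rewrite col_mxKu in t.
case/allpairsP=> -[j xi] [_ _ /= e]; apply: nu; exists [set j]; rewrite cards1 big_set1.
by split=> //; rewrite -(topA phi H0 beta j xi) -e col_mxKu.
Qed.
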